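(* Let $J$ be an ideal of $\mathcal{O}_n$ of finite colength and let $L=\{j,\dots,n\}$ for some $j\in\{1,\dots,n\}$. Then $\operatorname{in}(J_L)=\operatorname{in}(J)_L$.
   Context: $\mathcal{O}_n$ is the ring of germs of analytic functions $(\mathbb{C}^n,0)\to\mathbb{C}$ in coordinates $x_1,\dots,x_n$. For $L\subseteq\{1,\dots,n\}$ nonempty, $\mathcal{O}_{n,L}$ is the subring of germs depending only on the variables $x_i$, $i\in L$. For $f=\sum_k a_kx^k\in\mathcal{O}_n$, $f_L$ is the sum of the terms $a_kx^k$ with $k_i=0$ for all $i\notin L$; for an ideal $J$ of $\mathcal{O}_n$, $J_L$ is the ideal of $\mathcal{O}_{n,L}$ generated by all $f_L$, $f\in J$. Monomials are ordered by the negative lexicographical order: $x^\alpha>x^\beta$ iff there is $i$ with $(\alpha_1,\dots,\alpha_{i-1})=(\beta_1,\dots,\beta_{i-1})$ and $\alpha_i<\beta_i$ (in $\mathcal{O}_{n,L}$ one uses the restriction of this order to monomials in the variables $x_i$, $i\in L$). For $f\neq0$, $\operatorname{in}(f)$ is the largest monomial in the support of $f$, and the initial ideal $\operatorname{in}(K)$ of an ideal $K$ is the ideal generated by all $\operatorname{in}(f)$, $f\in K$ (computed in $\mathcal{O}_{n,L}$ for $K=J_L$). *)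

(* Defs.v *)
(* O_n is modelled as the ring of convergent power series
   in n variables over C = R[i], R a realType (the real numbers). *)
From HB Require Import structures.
From mathcomp Require Import all_boot all_order all_algebra.
From mathcomp Require Import reals.
From mathcomp.real_closed Require Import complex.
Set Implicit Arguments. Unset Strict Implicit. Unset Printing Implicit Defensive.
Import Order.TTheory GRing.Theory Num.Theory.
Local Open Scope ring_scope.

(* exponent vectors k = (k_0, ..., k_{n-1}) (variables indexed from 0) *)
Definition expo (n : nat) := {ffun 'I_n -> nat}.

Definition ser (R : realType) (n : nat) := expo n -> R[i].

Definition tdeg n (k : expo n) : nat := (\sum_(i < n) k i)%N.

(* germs of analytic functions = convergent power series *)
Definition convergent (R : realType) n (f : ser R n) : Prop :=
  exists (r M : R), 0 < r /\ forall k, `|f k| * ((r%:C)%C) ^+ tdeg k <= (M%:C)%C.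

Definition ser0 (R : realType) n : ser R n := fun _ => 0.
Definition seradd (R : realType) n (f g : ser R n) : ser R n := fun k => f k + g k.
Definition sersub (R : realType) n (f g : ser R n) : ser R n := fun k => f k - g k.
Definition serscale (R : realType) n (c : R[i]) (f : ser R n) : ser R n :=
  fun k => c * f k.

Definition exp_of n m (a : {ffun 'I_n -> 'I_m}) : expo n := [ffun i => nat_of_ord (a i)].
Definition expsub n (k a : expo n) : expo n := [ffun i => (k i - a i)%N].

(* Cauchy product: (f g)_k = sum_{a <= k} f_a g_{k-a} *)
Definition sermul (R : realType) n (f g : ser R n) : ser R n := fun k =>
  \sum_(a : {ffun 'I_n -> 'I_(\max_(i < n) k i).+1}
          | [forall i, (exp_of a i <= k i)%N])
     f (exp_of a) * g (expsub k (exp_of a)).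

Definition monom (R : realType) n (alpha : expo n) : ser R n :=
  fun k => if k == alpha then 1 else 0.

Definition is_ideal (R : realType) n (J : ser R n -> Prop) : Prop :=
  [/\ forall f, J f -> convergent f,
      J (@ser0 R n),
      forall f g, J f -> J g -> J (seradd f g)
    & forall h f, convergent h -> J f -> J (sermul h f)].

(* finite colength: O_n / J is a finite-dimensional C-vector space,
   i.e. spanned by the classes of finitely many germs *)
Definition finite_colength (R : realType) n (J : ser R n -> Prop) : Prop :=
  exists (m : nat) (g : 'I_m -> ser R n),
    (forall i, convergent (g i)) /\
    forall f, convergent f ->
      exists c : 'I_m -> R[i],
        J (sersub f (fun k => \sum_(i < m) c i * g i k)).

Definition OnL (R : realType) n (L : pred 'I_n) (f : ser R n) : Prop :=
  convergent f /\ forall k, f k != 0 -> forall i, ~~ L i -> k i = 0%N.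

Definition restrict (R : realType) n (L : pred 'I_n) (f : ser R n) : ser R n :=
  fun k => if [forall i, ~~ L i ==> (k i == 0%N)] then f k else 0.

Definition gen_ideal (R : realType) n (S G : ser R n -> Prop) (f : ser R n) : Prop :=
  exists (m : nat) (h g : 'I_m -> ser R n),
    (forall i, S (h i)) /\ (forall i, G (g i)) /\
    f = (fun k => \sum_(i < m) sermul (h i) (g i) k).

Definition restr_ideal (R : realType) n (L : pred 'I_n) (J : ser R n -> Prop) :=
  gen_ideal (OnL L) (fun g => exists f, J f /\ g = restrict L f).

(* negative lexicographical order: x^a > x^b iff a_i < b_i at the first
   index where they differ *)
Definition neglex_gt n (a b : expo n) : Prop :=
  exists i : 'I_n, (forall i' : 'I_n, (i' < i)%N -> a i' = b i') /\ (a i < b i)%N.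

Definition is_initial (R : realType) n (f : ser R n) (alpha : expo n) : Prop :=
  f alpha != 0 /\ forall beta, f beta != 0 -> beta <> alpha -> neglex_gt alpha beta.

(* initial ideal of K, computed in the ring S (O_n or O_{n,L}) *)
Definition init_ideal (R : realType) n (S K : ser R n -> Prop) :=
  gen_ideal S (fun g => exists f alpha,
                 K f /\ f <> @ser0 R n /\ is_initial f alpha /\ g = monom R alpha).

(* L = {j, ..., n} (paper indexing) = {i : 'I_n | j <= i} (0-based) *)
Definition Lfrom n (j : 'I_n) : pred 'I_n := fun i => (j <= i)%N.

(* Main.v *)
Require Import Defs.
From HB Require Import structures.
From mathcomp Require Import all_boot all_order all_algebra.
From mathcomp Require Import reals.
From mathcomp.real_closed Require Import complex.
From Stdlib Require Import FunctionalExtensionality ClassicalEpsilon.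
From mathcomp Require Import ring lra.
Set Implicit Arguments. Unset Strict Implicit. Unset Printing Implicit Defensive.
Import Order.TTheory GRing.Theory Num.Theory.
Local Open Scope ring_scope.

Section S.
Variables (R : realType) (n : nat).
Local Notation ser := (ser R n).
Local Notation expo := (expo n).

Definition e0 : expo := [ffun=> 0%N].
Definition expadd (a b : expo) : expo := [ffun i => (a i + b i)%N].
Definition leE (a b : expo) := [forall i, (a i <= b i)%N].

Lemma exp_of_inj m : injective (@exp_of n m).
Proof.
move=> a b /ffunP H; apply/ffunP=> i; apply/val_inj; have := H i; rewrite !ffunE; done.
Qed.

Lemma le_max (k : expo) i : (k i < (\max_(i0 < n) k i0).+1)%N.
Proof. by rewrite ltnS; apply: (@leq_bigmax (ordinal n) (fun i0 => k i0) i). Qed.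

Definition idx_of (k t : expo) : {ffun 'I_n -> 'I_(\max_(i < n) k i).+1} :=
  [ffun i => inord (t i)].

Lemma exp_of_idx (k t : expo) : leE t k -> exp_of (idx_of k t) = t.
Proof.
move=> /forallP H; apply/ffunP=> i; rewrite !ffunE inordK //.
exact: leq_ltn_trans (H i) (le_max k i).
Qed.

Lemma mulmonr (f : ser) (al : expo) k :
  sermul f (monom R al) k = if leE al k then f (expsub k al) else 0.
Proof.
rewrite /sermul; case: ifP => Hal.
- have Hle : leE (expsub k al) k by apply/forallP=> i; rewrite ffunE leq_subr.
  rewrite (bigD1 (idx_of k (expsub k al))) /=; last first.
    by rewrite exp_of_idx //; exact/forallP/forallP.
  rewrite [X in _ + X]big1 ?addr0.
    rewrite exp_of_idx // /monom; case: eqP => [_|]; first by rewrite mulr1.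
    move/forallP: Hal => Hal; case; apply/ffunP=> i; rewrite !ffunE.
    by rewrite subKn // Hal.
  move=> a /andP[/forallP Pa Na]; rewrite /monom; case: eqP; last by rewrite mulr0.
  move=> E; case/negP: Na; apply/eqP; apply: exp_of_inj; rewrite exp_of_idx //.
  apply/ffunP=> i; rewrite -E !ffunE subKn //; by have := Pa i; rewrite ffunE.
- apply: big1 => a /forallP Pa; rewrite /monom; case: eqP; last by rewrite mulr0.
  move=> E; move/negP: Hal; case; apply/forallP=> i; rewrite -E ffunE leq_subr //.
Qed.

Lemma mulmonl (g : ser) (al : expo) k :
  sermul (monom R al) g k = if leE al k then g (expsub k al) else 0.
Proof.
rewrite /sermul; case: ifP => Hal.
- rewrite (bigD1 (idx_of k al)) /=; last by rewrite exp_of_idx //; exact/forallP/forallP.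
  rewrite [X in _ + X]big1 ?addr0.
    by rewrite exp_of_idx // /monom eqxx mul1r.
  move=> a /andP[/forallP Pa Na]; rewrite /monom; case: eqP; last by rewrite mul0r.
  move=> E; case/negP: Na; apply/eqP; apply: exp_of_inj; rewrite exp_of_idx //.
- apply: big1 => a /forallP Pa; rewrite /monom; case: eqP; last by rewrite mul0r.
  move=> E; move/negP: Hal; case; apply/forallP=> i; rewrite -E; exact: Pa.
Qed.

Lemma expsub0 k : expsub k e0 = k.
Proof. by apply/ffunP=> i; rewrite !ffunE subn0. Qed.

Lemma mul1s (g : ser) : sermul (monom R e0) g = g.
Proof.
apply: functional_extensionality => k; rewrite mulmonl.
have -> : leE e0 k by apply/forallP=> i; rewrite ffunE.
by rewrite expsub0.
Qed.

Lemma sermul_supp (f g : ser) k : sermul f g k != 0 ->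
  exists a b, [/\ f a != 0, g b != 0 & forall i, k i = (a i + b i)%N].
Proof.
rewrite /sermul => H.
case: (boolP [exists a : {ffun 'I_n -> 'I_(\max_(i < n) k i).+1},
   [forall i, (exp_of a i <= k i)%N] &&
   (f (exp_of a) * g (expsub k (exp_of a)) != 0)]).
  case/existsP=> a /andP[/forallP Pa]; rewrite mulf_eq0 negb_or => /andP[Fa Ga].
  exists (exp_of a), (expsub k (exp_of a)); split=> // i.
  by rewrite [expsub _ _ _]ffunE subnKC //; exact: Pa.
move/existsPn => N; case/negP: H; apply/eqP; apply: big1 => a Pa.
by have := N a; rewrite Pa /= negbK => /eqP.
Qed.



Lemma tdeg_split (k a : expo) : (forall i, a i <= k i)%N ->
  tdeg k = (tdeg a + tdeg (expsub k a))%N.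
Proof.
move=> H; rewrite /tdeg -big_split; apply: eq_bigr => i _.
by rewrite /= [expsub _ _ _]ffunE subnKC.
Qed.

Lemma tdeg_add (k al : expo) : tdeg (expadd k al) = (tdeg k + tdeg al)%N.
Proof. by rewrite /tdeg -big_split; apply: eq_bigr => i _; rewrite ffunE. Qed.

Lemma geom (h : R[i]) N : 2 * h = 1 -> \sum_(j < N) h ^+ j = 2 - 2 * h ^+ N.
Proof.
move=> H; elim: N => [|N IH]; first by rewrite big_ord0 expr0 mulr1 subrr.
rewrite big_ord_recr /= IH exprS mulrA H mul1r.
ring.
Qed.

Lemma geom_le (h : R[i]) N : 0 <= h -> 2 * h = 1 -> \sum_(j < N) h ^+ j <= 2.
Proof.
move=> h0 H; rewrite geom // gerBl mulr_ge0 ?exprn_ge0 //.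
Qed.

Lemma sum_bound (h : R[i]) N (k : expo) : 0 <= h -> 2 * h = 1 ->
  \sum_(a : {ffun 'I_n -> 'I_N} | [forall i, (exp_of a i <= k i)%N])
     h ^+ tdeg (exp_of a) <= 2 ^+ n.
Proof.
move=> h0 H2; rewrite big_mkcond /=.
pose F := fun (i : 'I_n) (j : 'I_N) => if (j <= k i)%N then h ^+ j else 0.
have E : forall a : {ffun 'I_n -> 'I_N},
  (if [forall i, (exp_of a i <= k i)%N] then h ^+ tdeg (exp_of a) else 0)
   = \prod_(i : 'I_n) F i (a i).
  move=> a; case: ifP => Pa.
    rewrite /tdeg expr_sum; apply: eq_bigr => i _; rewrite /F.
    by move/forallP: Pa => Pa; have := Pa i; rewrite !ffunE => ->.
  have /forallPn [i Ni] := negbT Pa; rewrite (bigD1 i) //= /F.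
  by move: Ni; rewrite ffunE => /negbTE ->; rewrite mul0r.
rewrite (eq_bigr _ (fun a _ => E a)) -bigA_distr_bigA /=.
apply: (@le_trans _ _ (\prod_(i : 'I_n) (2 : R[i]))).
  apply: ler_prod => i _; apply/andP; split.
    by apply: sumr_ge0 => j _; rewrite /F; case: ifP => // _; rewrite exprn_ge0.
  apply: (@le_trans _ _ (\sum_(j < N) h ^+ j)); last exact: geom_le.
  by apply: ler_sum => j _; rewrite /F; case: ifP => // _; rewrite exprn_ge0.
by rewrite prodr_const card_ord.
Qed.


Lemma c_ge0 (r : R) : 0 < r -> 0 <= (r%:C)%C :> R[i].
Proof. by move=> r0; rewrite ler0c ltW. Qed.

Lemma conv_monom (al : expo) : convergent (monom R al).
Proof.
exists 1, 1; split=> // k; rewrite rmorph1 expr1n mulr1 /monom.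
by case: ifP => _; rewrite ?normr1 ?normr0 ?ler01.
Qed.

Lemma conv_restrict L (f : ser) : convergent f -> convergent (Defs.restrict L f).
Proof.
move=> [r [M [r0 H]]]; exists r, M; split=> // k.
rewrite /Defs.restrict; case: ifP => _ //; rewrite normr0 mul0r.
apply: le_trans (H k); by rewrite mulr_ge0 ?normr_ge0 ?exprn_ge0 ?c_ge0.
Qed.

Lemma conv_shift (t : ser) (al : expo) : convergent t ->
  convergent (fun k => t (expadd k al)).
Proof.
move=> [r [M [r0 H]]]; exists r, (M / r ^+ tdeg al); split=> // k.
rewrite rmorphM fmorphV rmorphXn ler_pdivlMr; last by rewrite exprn_gt0 // ltcR.
by have := H (expadd k al); rewrite tdeg_add exprD mulrA.
Qed.

Lemma conv_mul (f g : ser) : convergent f -> convergent g -> convergent (sermul f g).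
Proof.
move=> [r1 [M1 [r10 H1]]] [r2 [M2 [r20 H2]]].
pose rho := Num.min r1 r2 / 2.
have m0 : 0 < Num.min r1 r2 by rewrite lt_min r10 r20.
have rho0 : 0 < rho by rewrite divr_gt0.
have m1 : Num.min r1 r2 <= r1 by rewrite ge_min lexx.
have m2 : Num.min r1 r2 <= r2 by rewrite ge_min lexx orbT.
exists rho, (M1 * M2 * 2 ^+ n); split=> // k.
set c := (rho%:C)%C; set c1 := (r1%:C)%C; set c2 := (r2%:C)%C.
set h := (((2:R)^-1)%:C)%C.
have c0 : 0 <= c by exact: c_ge0.
have h0 : 0 <= h by rewrite ler0c invr_ge0 ler0n.
have h2 : 2 * h = 1.
  rewrite (_ : (2 : R[i]) = ((2:R)%:C)%C); last by rewrite rmorph_nat.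
  by rewrite -rmorphM divff ?rmorph1 ?pnatr_eq0.
have cc1 : c <= c1 * h by rewrite -rmorphM lecR /rho; lra.
have cc2 : c <= c2 by rewrite lecR /rho; lra.
have M10 : 0 <= (M1%:C)%C :> R[i].
  apply: le_trans (H1 (e0)); by rewrite mulr_ge0 ?normr_ge0 ?exprn_ge0 ?c_ge0.
have M20 : 0 <= (M2%:C)%C :> R[i].
  apply: le_trans (H2 (e0)); by rewrite mulr_ge0 ?normr_ge0 ?exprn_ge0 ?c_ge0.
rewrite /sermul.
apply: (le_trans (ler_wpM2r (exprn_ge0 _ c0) (ler_norm_sum _ _ _))).
rewrite mulr_suml.
apply: (@le_trans _ _ (\sum_(a : {ffun 'I_n -> 'I_(\max_(i < n) k i).+1} |
     [forall i, (exp_of a i <= k i)%N])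
   ((M1%:C)%C * (M2%:C)%C) * h ^+ tdeg (exp_of a))).
  apply: ler_sum => a /forallP Pa.
  rewrite normrM (tdeg_split Pa) exprD.
  set b := expsub k (exp_of a).
  have A : `|f (exp_of a)| * c ^+ tdeg (exp_of a) <= (M1%:C)%C * h ^+ tdeg (exp_of a).
    apply: (@le_trans _ _ (`|f (exp_of a)| * (c1 * h) ^+ tdeg (exp_of a))).
      apply: ler_wpM2l; first exact: normr_ge0.
      by apply: lerXn2r; rewrite ?nnegrE // mulr_ge0 // c_ge0.
    rewrite exprMn mulrA; apply: ler_wpM2r; first exact: exprn_ge0.
    exact: H1.
  have B : `|g b| * c ^+ tdeg b <= (M2%:C)%C.
    apply: (@le_trans _ _ (`|g b| * c2 ^+ tdeg b)); last exact: H2.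
    apply: ler_wpM2l; first exact: normr_ge0.
    by apply: lerXn2r; rewrite ?nnegrE // c_ge0.
  rewrite mulrACA.
  apply: (le_trans (ler_pM _ _ A B)).
  - by rewrite mulr_ge0 ?normr_ge0 ?exprn_ge0.
  - by rewrite mulr_ge0 ?normr_ge0 ?exprn_ge0.
  by rewrite mulrAC.
rewrite -mulr_sumr !rmorphM rmorphXn rmorph_nat.
apply: ler_wpM2l; first exact: mulr_ge0.
exact: sum_bound.
Qed.

Section L.
Variable L : pred 'I_n.

Definition Lsupp (f : ser) := forall k, f k != 0 -> forall i, ~~ L i -> k i = 0%N.
Definition zo (k : expo) := [forall i, ~~ L i ==> (k i == 0%N)].

Lemma zoP (k : expo) : reflect (forall i, ~~ L i -> k i = 0%N) (zo k).
Proof.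
apply: (iffP forallP) => H i.
  by move=> Li; have := H i; rewrite Li => /eqP.
by apply/implyP => /H ->.
Qed.

Lemma restrictE (f : ser) (k : expo) : Defs.restrict L f k = if zo k then f k else 0.
Proof. by []. Qed.

Lemma Lsupp_restrict (f : ser) : Lsupp (Defs.restrict L f).
Proof. by move=> k; rewrite restrictE; case: (zoP k) => // _; rewrite eqxx. Qed.

Lemma restrict_id (f : ser) : Lsupp f -> Defs.restrict L f = f.
Proof.
move=> H; apply: functional_extensionality => k; rewrite restrictE.
case: (zoP k) => // Hk; case: (eqVneq (f k) 0) => // /H Hf.
by case: Hk.
Qed.

Lemma Lsupp_mul (f g : ser) : Lsupp f -> Lsupp g -> Lsupp (sermul f g).
Proof.
move=> Hf Hg k /sermul_supp [a [b [Fa Gb E]]] i Li.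
by rewrite E (Hf _ Fa i Li) (Hg _ Gb i Li).
Qed.

Lemma Lsupp_sum m (x : 'I_m -> ser) : (forall i, Lsupp (x i)) ->
  Lsupp (fun k => \sum_(i < m) x i k).
Proof.
move=> H k Hk; case: (boolP [exists i, x i k != 0]).
  by case/existsP=> i /H.
move/existsPn=> N; case/negP: Hk; apply/eqP; apply: big1 => i _.
by have := N i; rewrite negbK => /eqP.
Qed.

Lemma restrict_mul (h F : ser) : Lsupp h -> Defs.restrict L (sermul h F) = sermul h (Defs.restrict L F).
Proof.
move=> Hh; apply: functional_extensionality => k; rewrite restrictE.
case: (zoP k) => Hk.
  rewrite /sermul; apply: eq_bigr => a /forallP Pa; congr (_ * _).
  rewrite restrictE; case: (zoP _) => // N; case: N => i Li.
  rewrite ffunE Hk //.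
rewrite /sermul; apply/esym; apply: big1 => a /forallP Pa.
case: (eqVneq (h (exp_of a)) 0) => [->|Ha]; first by rewrite mul0r.
rewrite restrictE; case: (zoP _) => Z; last by rewrite mulr0.
case: Hk => i Li; have := Z i Li; rewrite ffunE (Hh _ Ha i Li) subn0 => ->.
done.
Qed.

Lemma restrict_sum m (x : 'I_m -> ser) :
  Defs.restrict L (fun k => \sum_(i < m) x i k) = (fun k => \sum_(i < m) Defs.restrict L (x i) k).
Proof.
apply: functional_extensionality => k; rewrite restrictE.
case: ifP => H; first by apply: eq_bigr => i _; rewrite restrictE H.
by apply/esym; apply: big1 => i _; rewrite restrictE H.
Qed.

Lemma restrict_monom (al : expo) : zo al -> Defs.restrict L (monom R al) = monom R al.
Proof.
move=> H; apply: restrict_id => k; rewrite /monom.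
case: (eqVneq k al) => [-> _|]; last by rewrite eqxx.
exact/zoP.
Qed.

End L.

Lemma sermul_sumr m (h : ser) (x : 'I_m -> ser) (k : expo) :
  sermul h (fun k => \sum_(i < m) x i k) k = \sum_(i < m) sermul h (x i) k.
Proof.
rewrite /sermul exchange_big /=; apply: eq_bigr => a _; by rewrite mulr_sumr.
Qed.

Section Gen.
Variables S G : ser -> Prop.

Lemma gen0 : gen_ideal S G (fun _ => 0).
Proof.
exists 0%N, (fun _ => @ser0 R n), (fun _ => @ser0 R n); split; first by case.
split; first by case.
by apply: functional_extensionality => k; rewrite big_ord0.
Qed.

Lemma gen1 (h g : ser) : S h -> G g -> gen_ideal S G (sermul h g).
Proof.
move=> Sh Gg; exists 1%N, (fun _ => h), (fun _ => g); do 2!split=> //.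
by apply: functional_extensionality => k; rewrite big_ord1.
Qed.

Lemma gen_add (f1 f2 : ser) : gen_ideal S G f1 -> gen_ideal S G f2 ->
  gen_ideal S G (fun k => f1 k + f2 k).
Proof.
move=> [m1 [h1 [g1 [S1 [G1 ->]]]]] [m2 [h2 [g2 [S2 [G2 ->]]]]].
exists (m1 + m2)%N,
  (fun i => match split i with inl a => h1 a | inr b => h2 b end),
  (fun i => match split i with inl a => g1 a | inr b => g2 b end).
split; first by move=> i; case: split.
split; first by move=> i; case: split.
apply: functional_extensionality => k; rewrite big_split_ord /=.
congr (_ + _); apply: eq_bigr => i _.
  by rewrite (unsplitK (inl _ i)).
by rewrite (unsplitK (inr _ i)).
Qed.

Lemma gen_sum m (t : 'I_m -> ser) : (forall i, gen_ideal S G (t i)) ->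
  gen_ideal S G (fun k => \sum_(i < m) t i k).
Proof.
elim: m t => [|m IH] t H.
  have -> : (fun k => \sum_(i < 0) t i k) = (fun _ => 0).
    by apply: functional_extensionality => k; rewrite big_ord0.
  exact: gen0.
have -> : (fun k => \sum_(i < m.+1) t i k) =
  (fun k => (fun k => \sum_(i < m) t (widen_ord (leqnSn m) i) k) k + t ord_max k).
  by apply: functional_extensionality => k; rewrite big_ord_recr.
apply: gen_add; last exact: H.
exact: (IH (fun i => t (widen_ord (leqnSn m) i))).
Qed.

End Gen.


Lemma Lsupp_monom L (al : expo) : zo L al -> Lsupp L (monom R al).
Proof.
move=> H k; rewrite /monom; case: (eqVneq k al) => [-> _|]; last by rewrite eqxx.
exact/zoP.
Qed.

Lemma gen_Lsupp L G (F : ser) : (forall g, G g -> Lsupp L g) ->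
  gen_ideal (OnL L) G F -> Lsupp L F.
Proof.
move=> HG [m [h [g [Sh [Gg ->]]]]]; apply: Lsupp_sum => i.
apply: Lsupp_mul; [exact: (Sh i).2 | exact: HG].
Qed.

Lemma J_sum (J : ser -> Prop) m (x : 'I_m -> ser) :
  J (@ser0 R n) -> (forall f g, J f -> J g -> J (seradd f g)) ->
  (forall i, J (x i)) -> J (fun k => \sum_(i < m) x i k).
Proof.
move=> J0 Jadd; elim: m x => [|m IH] x H.
  have -> : (fun k => \sum_(i < 0) x i k) = @ser0 R n; last done.
  by apply: functional_extensionality => k; rewrite big_ord0.
have -> : (fun k => \sum_(i < m.+1) x i k) =
  seradd (fun k => \sum_(i < m) x (widen_ord (leqnSn m) i) k) (x ord_max).
  by apply: functional_extensionality => k; rewrite big_ord_recr.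
by apply: Jadd; [apply: IH | apply: H].
Qed.

Lemma init_restrict (j : 'I_n) (F : ser) (al : expo) :
  is_initial (Defs.restrict (Lfrom j) F) al -> is_initial F al.
Proof.
move=> [Ha Hb].
have Zal : zo (Lfrom j) al by move: Ha; rewrite restrictE; case: ifP => //; rewrite eqxx.
split; first by move: Ha; rewrite restrictE Zal.
move=> be Fb nb; case: (boolP (zo (Lfrom j) be)) => Zb.
  by apply: Hb => //; rewrite restrictE Zb.
have /forallPn [i0] := Zb; rewrite negb_imply => /andP[Li0 bi0].
case: (@arg_minnP _ i0 (fun i => be i != 0%N) (fun i => nat_of_ord i) bi0).
move=> i Pi Hmin.
have ij : (i < j)%N.
  have := Hmin i0 bi0; move: Li0; rewrite /Lfrom -ltnNge => ? ?.
  exact: leq_ltn_trans (_ : (i <= i0)%N) _.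
have Zal' : forall i' : 'I_n, (i' < j)%N -> al i' = 0%N.
  by move=> i' Hi'; apply: (zoP _ _ Zal); rewrite /Lfrom -ltnNge.
exists i; split.
  move=> i' Hi'; rewrite Zal'; last exact: ltn_trans Hi' ij.
  case: (eqVneq (be i') 0%N) => // /Hmin; rewrite leqNgt Hi' //.
by rewrite Zal' // lt0n.
Qed.

Lemma expaddK (k al : expo) : leE al k -> expadd (expsub k al) al = k.
Proof.
move/forallP=> H; apply/ffunP=> i; rewrite !ffunE subnK //; exact: H.
Qed.

End S.

Theorem lemma2p3 (R : realType) (n : nat) (J : ser R n -> Prop) (j : 'I_n) :
  is_ideal J -> finite_colength J ->
  forall f : ser R n,
    init_ideal (OnL (Lfrom j)) (restr_ideal (Lfrom j) J) f <->
    restr_ideal (Lfrom j) (init_ideal (@convergent R n) J) f.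
Proof.
move=> [Jc J0 Jadd Jmul] _ f.
split.
- move=> [m [h [g [Sh [Gg ->]]]]].
  exists m, h, g; split=> //; split=> // i.
  have [F [al [HF [F0 [Hin ->]]]]] := Gg i.
  have LF : Lsupp (Lfrom j) F.
    apply: gen_Lsupp HF => g' [f' [_ ->]]; exact: Lsupp_restrict.
  have Zal : zo (Lfrom j) al by apply/zoP; exact: (LF _ Hin.1).
  exists (monom R al); split; last by rewrite restrict_monom.
  have [F' [JF' EF']] : exists F', J F' /\ Defs.restrict (Lfrom j) F' = F.
    move: HF => [m2 [h2 [g2 [Sh2 [Gg2 ->]]]]].
    pose Fs := fun l => proj1_sig (constructive_indefinite_description _ (Gg2 l)).
    have HFs : forall l, J (Fs l) /\ g2 l = Defs.restrict (Lfrom j) (Fs l).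
      by move=> l; exact: (proj2_sig (constructive_indefinite_description _ (Gg2 l))).
    exists (fun k => \sum_(l < m2) sermul (h2 l) (Fs l) k); split.
      apply: J_sum => // l; apply: Jmul; [exact: (Sh2 l).1 | exact: (HFs l).1].
    rewrite restrict_sum; apply: functional_extensionality => k.
    apply: eq_bigr => l _; rewrite restrict_mul; last exact: (Sh2 l).2.
    by rewrite (HFs l).2.
  rewrite -(mul1s (monom R al)); apply: gen1; first exact: conv_monom.
  have Hin' : is_initial F' al by apply: (init_restrict (j:=j)); rewrite EF'.
  exists F', al; split=> //; split=> //.
  by move=> E; move: Hin'.1; rewrite E /ser0 eqxx.
- move=> [m [h [g [Sh [Gg ->]]]]].
  apply: gen_sum => i.
  have [G [HG ->]] := Gg i.
  move: HG => [m2 [c [gg [Sc [Ggg ->]]]]].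
  rewrite restrict_sum.
  have -> : sermul (h i) (fun k => \sum_(l < m2) Defs.restrict (Lfrom j) (sermul (c l) (gg l)) k)
     = (fun k => \sum_(l < m2) sermul (h i) (Defs.restrict (Lfrom j) (sermul (c l) (gg l))) k).
    by apply: functional_extensionality => k; rewrite sermul_sumr.
  apply: gen_sum => l.
  have [F [al [JF [F0 [Hin ->]]]]] := Ggg l.
  case: (boolP (zo (Lfrom j) al)) => Zal; last first.
    have -> : Defs.restrict (Lfrom j) (sermul (c l) (monom R al)) = (fun _ => 0).
      apply: functional_extensionality => k; rewrite restrictE mulmonr.
      case: (boolP (zo (Lfrom j) k)) => // Zk; case: ifP => // /forallP Hle.
      case/negP: Zal; apply/zoP => i' Li'; apply/eqP; rewrite -leqn0.
      by rewrite -(zoP _ _ Zk i' Li'); exact: Hle.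
    have -> : sermul (h i) (fun _ => 0) = (fun _ => 0 : R[i]).
      apply: functional_extensionality => k; rewrite /sermul.
      by apply: big1 => a _; rewrite mulr0.
    exact: gen0.
  set t := sermul (h i) (Defs.restrict (Lfrom j) (sermul (c l) (monom R al))).
  have Lt : Lsupp (Lfrom j) t.
    apply: Lsupp_mul; [exact: (Sh i).2 | exact: Lsupp_restrict].
  have -> : t = sermul (fun k => t (expadd k al)) (monom R al).
    apply: functional_extensionality => k; rewrite mulmonr.
    case: ifP => Hk; first by rewrite expaddK.
    case: (eqVneq (t k) 0) => // /sermul_supp [a [b [_ Hb Ek]]].
    move: Hb; rewrite restrictE; case: ifP => _; last by rewrite eqxx.
    rewrite mulmonr; case: ifP => [/forallP Hab _|]; last by rewrite eqxx.
    case/negP: Hk; apply/forallP => i'; rewrite Ek.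
    exact: leq_trans (Hab i') (leq_addl _ _).
  apply: gen1.
    split.
      apply: conv_shift; apply: conv_mul; first exact: (Sh i).1.
      by apply: conv_restrict; apply: conv_mul => //; exact: conv_monom.
    move=> k Hk i' Li'; have := Lt _ Hk i' Li'; rewrite ffunE => /eqP.
    by rewrite addn_eq0 => /andP[/eqP].
  exists (Defs.restrict (Lfrom j) F), al; split.
    rewrite -(mul1s (Defs.restrict (Lfrom j) F)); apply: gen1.
      split; first exact: conv_monom.
      by apply: Lsupp_monom; apply/zoP => i' _; rewrite ffunE.
    by exists F.
  have Ral : Defs.restrict (Lfrom j) F al = F al by rewrite restrictE Zal.
  split.
    by move=> E; move: Hin.1; rewrite -Ral E /ser0 eqxx.
  split=> //; split; first by rewrite Ral; exact: Hin.1.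
  move=> be; rewrite restrictE; case: ifP => _; last by rewrite eqxx.
  exact: Hin.2.
Qed.
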